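(* Let $R$ be a ring, let $\mathcal C$ be a full subcategory of $\operatorname{Mod-}R$ all of whose objects are indecomposable right $R$-modules, and let $\mathcal P,\mathcal Q$ be completely prime ideals of $\mathcal C$ such that for every $A\in\operatorname{Ob}(\mathcal C)$ an endomorphism $f\colon A\to A$ is an automorphism if and only if $f\notin\mathcal P(A,A)\cup\mathcal Q(A,A)$. Assume $\mathcal C$ satisfies Condition (DSP). Let $A,B,C\in\operatorname{Ob}(\mathcal C)$ with $[C]_{\mathcal P}=[A]_{\mathcal P}$ and $[C]_{\mathcal Q}=[B]_{\mathcal Q}$. Then there exists $D\in\operatorname{Ob}(\mathcal C)$ with $A\oplus B\cong C\oplus D$. Moreover $[D]_{\mathcal P}=[B]_{\mathcal P}$ and $[D]_{\mathcal Q}=[A]_{\mathcal Q}$.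
   Context: A completely prime ideal $\mathcal P$ of a full subcategory $\mathcal C$ of $\operatorname{Mod-}R$ consists of a subgroup $\mathcal P(A,B)$ of $\operatorname{Hom}_R(A,B)$ for each pair of objects $A,B$ of $\mathcal C$ such that: (1) for all objects $A,B,C$ and morphisms $f\colon A\to B$, $g\colon B\to C$, one has $gf\in\mathcal P(A,C)$ if and only if $f\in\mathcal P(A,B)$ or $g\in\mathcal P(B,C)$; (2) $\mathcal P(A,A)\neq\operatorname{Hom}_R(A,A)$ for every object $A$. For objects $A,B$, write $[A]_{\mathcal P}=[B]_{\mathcal P}$ (''same $\mathcal P$ class'') if $\mathcal P(A,B)\ne\operatorname{Hom}_R(A,B)$ and $\mathcal P(B,A)\neq\operatorname{Hom}_R(B,A)$. $\mathcal C$ satisfies Condition (DSP) if whenever $A,B,C,D$ are right $R$-modules with $A\oplus B\cong C\oplus D$ and $A,B,C\in\operatorname{Ob}(\mathcal C)$, then $D\in\operatorname{Ob}(\mathcal C)$. *)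

(* Defs.v *)
From HB Require Import structures.
From mathcomp Require Import all_boot all_order all_algebra.
Set Implicit Arguments. Unset Strict Implicit. Unset Printing Implicit Defensive.
Import GRing.Theory.
Local Open Scope ring_scope.

(* Right R-modules = left modules over the converse ring R^c. *)
Definition rmod (R : pzRingType) := lmodType (GRing.converse R).

Definition rhom (R : pzRingType) (A B : rmod R) (f : A -> B) : Prop := linear f.

Definition riso (R : pzRingType) (A B : rmod R) (f : A -> B) : Prop :=
  rhom f /\ bijective f.
Definition risomorphic (R : pzRingType) (A B : rmod R) : Prop :=
  exists f : A -> B, riso f.

Definition dsum (R : pzRingType) (A B : rmod R) : rmod R := (A * B)%type.

Definition submodule (R : pzRingType) (A : rmod R) (S : A -> Prop) : Prop :=
  S 0 /\ (forall x y, S x -> S y -> S (x + y)) /\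
  (forall (r : GRing.converse R) x, S x -> S (r *: x)).

Definition indecomposable (R : pzRingType) (A : rmod R) : Prop :=
  (exists x : A, x <> 0) /\
  forall S T : A -> Prop, submodule S -> submodule T ->
    (forall x, S x -> T x -> x = 0) ->
    (forall x, exists s t, S s /\ T t /\ x = s + t) ->
    (forall x, S x -> x = 0) \/ (forall x, T x -> x = 0).

(* An assignment of a set of maps P(A,B) to each pair of modules;
   only its values on objects of the subcategory matter. *)
Definition morclass (R : pzRingType) :=
  forall A B : rmod R, (A -> B) -> Prop.

Record completely_prime_ideal (R : pzRingType) (Ob : rmod R -> Prop)
    (P : morclass R) : Prop := {
  cpi_hom : forall A B : rmod R, Ob A -> Ob B ->
    forall f : A -> B, P A B f -> rhom f;
  cpi_zero : forall A B : rmod R, Ob A -> Ob B -> P A B (fun _ => 0);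
  cpi_sub : forall A B : rmod R, Ob A -> Ob B -> forall f g : A -> B,
    P A B f -> P A B g -> P A B (fun x => f x - g x);
  cpi_prime : forall A B C : rmod R, Ob A -> Ob B -> Ob C ->
    forall (f : A -> B) (g : B -> C), rhom f -> rhom g ->
    (P A C (g \o f) <-> P A B f \/ P B C g);
  cpi_proper : forall A : rmod R, Ob A ->
    exists f : A -> A, rhom f /\ ~ P A A f
}.

Definition P_ne_hom (R : pzRingType) (P : morclass R) (A B : rmod R) : Prop :=
  exists f : A -> B, rhom f /\ ~ P A B f.

Definition same_class (R : pzRingType) (P : morclass R) (A B : rmod R) : Prop :=
  P_ne_hom P A B /\ P_ne_hom P B A.

Definition DSP (R : pzRingType) (Ob : rmod R -> Prop) : Prop :=
  forall A B C D : rmod R,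
    risomorphic (dsum A B) (dsum C D) -> Ob A -> Ob B -> Ob C -> Ob D.

(* Main.v *)
Require Import Defs.
From HB Require Import structures.
From mathcomp Require Import all_boot all_order all_algebra.
Set Implicit Arguments. Unset Strict Implicit. Unset Printing Implicit Defensive.
Import GRing.Theory.
Local Open Scope ring_scope.

Section L.
Lemma lin_add (R : pzRingType) (X C : rmod R) (p : X -> C) (hp : rhom p) u v :
  p (u + v) = p u + p v.
Proof. by rewrite -{1}(scale1r u) hp scale1r. Qed.
Lemma lin_0 (R : pzRingType) (X C : rmod R) (p : X -> C) (hp : rhom p) : p 0 = 0.
Proof. by apply/esym/(@addrI _ (p 0)); rewrite -lin_add // !addr0. Qed.
Lemma lin_Z (R : pzRingType) (X C : rmod R) (p : X -> C) (hp : rhom p) a u :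
  p (a *: u) = a *: p u.
Proof. by rewrite -[a *: u]addr0 hp lin_0 // addr0. Qed.
Lemma lin_N (R : pzRingType) (X C : rmod R) (p : X -> C) (hp : rhom p) u :
  p (- u) = - p u.
Proof. by apply/(@addIr _ (p u)); rewrite -lin_add // !addNr lin_0. Qed.
Lemma lin_B (R : pzRingType) (X C : rmod R) (p : X -> C) (hp : rhom p) u v :
  p (u - v) = p u - p v.
Proof. by rewrite lin_add // lin_N. Qed.
End L.

Definition kerp (R : pzRingType) (X C : rmod R) (p : X -> C) (hp : rhom p) : {pred X} :=
  [pred x : X | p x == 0].
Lemma kerp_closed (R : pzRingType) (X C : rmod R) (p : X -> C) (hp : rhom p) :
  GRing.submod_closed (kerp hp).
Proof.
split; first by rewrite inE /= lin_0.
by move=> a u v; rewrite !inE /= hp => /eqP -> /eqP ->; rewrite scaler0 addr0.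
Qed.
HB.instance Definition _ (R : pzRingType) (X C : rmod R) (p : X -> C) (hp : rhom p) :=
  GRing.isSubmodClosed.Build _ _ (kerp hp) (kerp_closed hp).
Record kert (R : pzRingType) (X C : rmod R) (p : X -> C) (hp : rhom p) :=
  KerT {kval : X; kvalP : kval \in kerp hp}.
HB.instance Definition _ (R : pzRingType) (X C : rmod R) (p : X -> C) (hp : rhom p) :=
  [isSub for @kval R X C p hp].
HB.instance Definition _ (R : pzRingType) (X C : rmod R) (p : X -> C) (hp : rhom p) :=
  [Choice of kert hp by <:].
HB.instance Definition _ (R : pzRingType) (X C : rmod R) (p : X -> C) (hp : rhom p) :=
  [SubChoice_isSubLmodule of kert hp by <:].

Lemma split_lemma (R : pzRingType) (X C : rmod R) (i : C -> X) (p : X -> C)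
  (hi : rhom i) (hp : rhom p) (hpi : forall c, p (i c) = c) :
  exists (D : rmod R) (j : X -> D) (k : D -> X), rhom j /\ rhom k /\
    risomorphic X (dsum C D) /\ forall x, k (j x) = x - i (p x).
Proof.
have jP : forall x, x - i (p x) \in kerp hp.
  by move=> x; rewrite inE /= lin_B // hpi subrr.
pose j x : kert hp := KerT (jP x).
have kj : forall x, kval (j x) = x - i (p x) by [].
exists (kert hp), j, (@kval _ _ _ _ hp).
have hk : rhom (@kval _ _ _ _ hp).
  by move=> a u v.
have hj : rhom j.
  move=> a u v; apply: val_inj; rewrite /= hp hi scalerBr.
  by rewrite addrACA opprD addrA.
split=> //; split=> //; split=> //.
pose phi (x : X) : dsum C (kert hp) := (p x, j x).
pose psi (y : dsum C (kert hp)) : X := i y.1 + kval y.2.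
exists phi; split.
  move=> a u v; rewrite /phi hp hj //.
exists psi.
  by move=> x; rewrite /psi /phi /= addrC subrK.
case=> c d; rewrite /phi /psi /=.
have pd : p (kval d) = 0 by apply/eqP; exact: (kvalP d).
have e1 : p (i c + kval d) = c by rewrite lin_add // hpi pd addr0.
congr pair => //; apply: val_inj => /=; rewrite e1.
by rewrite addrC addKr.
Qed.

From Stdlib Require Import FunctionalExtensionality Classical.

Section Ideal.
Lemma rhom_id (R : pzRingType) (A : rmod R) : rhom (fun x : A => x).
Proof. by []. Qed.
Lemma rhom_comp (R : pzRingType) (A B C : rmod R) (f : A -> B) (g : B -> C) :
  rhom f -> rhom g -> rhom (g \o f).
Proof. by move=> hf hg a u v; rewrite /= hf hg. Qed.

Lemma cpi_id (R : pzRingType) Ob (P : morclass R) (HP : completely_prime_ideal Ob P)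
  (A : rmod R) : Ob A -> ~ P A A (fun x => x).
Proof.
move=> oA hid; have [f [hf nf]] := cpi_proper HP oA; apply: nf.
have := proj2 (cpi_prime HP oA oA oA (@rhom_id R A) hf) (or_introl hid).
by [].
Qed.

Lemma cpi_add (R : pzRingType) Ob (P : morclass R) (HP : completely_prime_ideal Ob P)
  (A B : rmod R) (f g : A -> B) : Ob A -> Ob B -> P A B f -> P A B g ->
  P A B (fun x => f x + g x).
Proof.
move=> oA oB pf pg.
have e : (fun x => f x + g x) = (fun x => f x - ((fun _ => 0) x - g x)).
  by apply: functional_extensionality => x; rewrite sub0r opprK.
rewrite e; apply: (cpi_sub HP) => //; apply: (cpi_sub HP) => //; exact: (cpi_zero HP).
Qed.

Lemma cpi_idsub (R : pzRingType) Ob (P : morclass R) (HP : completely_prime_ideal Ob P)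
  (A : rmod R) (k : A -> A) : Ob A -> P A A k -> ~ P A A (fun x => x - k x).
Proof.
move=> oA pk ph; apply: (cpi_id HP oA).
have e : (fun x : A => x) = (fun x => (x - k x) + k x).
  by apply: functional_extensionality => x; rewrite subrK.
by rewrite e; apply: (cpi_add HP (f := fun x => x - k x)).
Qed.

Lemma cpi_comp_not (R : pzRingType) Ob (P : morclass R) (HP : completely_prime_ideal Ob P)
  (A B C : rmod R) (f : A -> B) (g : B -> C) : Ob A -> Ob B -> Ob C ->
  rhom f -> rhom g -> ~ P A B f -> ~ P B C g -> ~ P A C (g \o f).
Proof.
move=> oA oB oC hf hg nf ng /(cpi_prime HP oA oB oC hf hg) [] //.
Qed.

Lemma cpi_comp_in (R : pzRingType) Ob (P : morclass R) (HP : completely_prime_ideal Ob P)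
  (A B C : rmod R) (f : A -> B) (g : B -> C) : Ob A -> Ob B -> Ob C ->
  rhom f -> rhom g -> P A B f \/ P B C g -> P A C (g \o f).
Proof.
by move=> oA oB oC hf hg /(cpi_prime HP oA oB oC hf hg).
Qed.

Lemma cpi_factors (R : pzRingType) Ob (P : morclass R) (HP : completely_prime_ideal Ob P)
  (A B C : rmod R) (f : A -> B) (g : B -> C) : Ob A -> Ob B -> Ob C ->
  rhom f -> rhom g -> ~ P A C (g \o f) -> ~ P A B f /\ ~ P B C g.
Proof.
move=> oA oB oC hf hg n; split=> h; apply: n; apply: (cpi_comp_in HP) => //; tauto.
Qed.

Lemma same_trans (R : pzRingType) Ob (P : morclass R) (HP : completely_prime_ideal Ob P)
  (A B C : rmod R) : Ob A -> Ob B -> Ob C ->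
  same_class P A B -> same_class P B C -> same_class P A C.
Proof.
move=> oA oB oC [[f [hf nf]] [f' [hf' nf']]] [[g [hg ng]] [g' [hg' ng']]].
split.
  by exists (g \o f); split; [apply: rhom_comp | apply: (cpi_comp_not HP)].
by exists (f' \o g'); split; [apply: rhom_comp | apply: (cpi_comp_not HP)].
Qed.

Lemma same_sym (R : pzRingType) (P : morclass R) (A B : rmod R) :
  same_class P A B -> same_class P B A.
Proof. by case. Qed.
End Ideal.

Lemma side_lemma (R : pzRingType) Ob (P : morclass R) (HP : completely_prime_ideal Ob P)
  (B C D X : rmod R) (oB : Ob B) (oC : Ob C) (oD : Ob D)
  (i : C -> X) (pi : X -> C) (be : C -> C) (j : X -> D) (k : D -> X)
  (u : B -> X) (v : X -> B)
  (hi : rhom i) (hpi : rhom pi) (hbe : rhom be) (hj : rhom j) (hk : rhom k)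
  (hu : rhom u) (hv : rhom v) (vu : forall b, v (u b) = b)
  (kj : forall x, k (j x) = x - i (be (pi x)))
  (hyp : P C B (v \o i) \/ P B C (pi \o u)) :
  same_class P D B.
Proof.
have hK : P B B ((v \o i) \o (be \o (pi \o u))).
  have hc1 : rhom (be \o (pi \o u)) by do 2 apply: rhom_comp.
  apply: (cpi_comp_in HP) => //; first by do 2 apply: rhom_comp.
  case: hyp => [h|h]; [by right|left].
  by apply: (cpi_comp_in HP) => //; [apply: rhom_comp | left].
have nh := cpi_idsub HP oB hK.
have e : (fun x => x - ((v \o i) \o (be \o (pi \o u))) x) = (v \o k) \o (j \o u).
  by apply: functional_extensionality => b /=; rewrite kj lin_B // vu.
rewrite e in nh.
have [n1 n2] := cpi_factors HP oB oD oB (rhom_comp hu hj) (rhom_comp hk hv) nh.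
split; [exists (v \o k) | exists (j \o u)]; split => //; exact: rhom_comp.
Qed.

Lemma construct (R : pzRingType) (Ob : rmod R -> Prop) (P Q : morclass R)
  (Haut : forall A : rmod R, Ob A -> forall f : A -> A, rhom f ->
            (riso f <-> ~ (P A A f \/ Q A A f)))
  (Hdsp : DSP Ob)
  (A B C : rmod R) (HA : Ob A) (HB : Ob B) (HC : Ob C)
  (i : C -> dsum A B) (pi : dsum A B -> C) (hi : rhom i) (hpi : rhom pi)
  (nP : ~ P C C (pi \o i)) (nQ : ~ Q C C (pi \o i)) :
  exists (D : rmod R) (j : dsum A B -> D) (k : D -> dsum A B) (be : C -> C),
    Ob D /\ risomorphic (dsum A B) (dsum C D) /\ rhom j /\ rhom k /\ rhom be /\
    forall x, k (j x) = x - i (be (pi x)).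
Proof.
have hal : rhom (pi \o i) by apply: rhom_comp.
have [_ [be c1 c2]] : riso (pi \o i) by apply/(Haut C HC _ hal); tauto.
have hbe : rhom be.
  have c2' : forall x, pi (i (be x)) = x by exact: c2.
  move=> a u v; apply: (can_inj c1); rewrite /= c2'.
  have := hal a (be u) (be v); rewrite /= => ->; by rewrite !c2'.
have [D [j [k [hj [hk [iso kj]]]]]] :=
  split_lemma hi (rhom_comp hpi hbe) (fun c => c1 c).
exists D, j, k, be; do ! split => //.
exact: (Hdsp A B C D iso).
Qed.

Lemma rhom_iA (R : pzRingType) (A B : rmod R) : rhom (fun a : A => ((a, 0) : dsum A B)).
Proof. by move=> a x y; rewrite -[RHS]/(a *: x + y, a *: 0 + 0) scaler0 addr0. Qed.
Lemma rhom_iB (R : pzRingType) (A B : rmod R) : rhom (fun b : B => ((0, b) : dsum A B)).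
Proof. by move=> a x y; rewrite -[RHS]/(a *: 0 + 0, a *: x + y) scaler0 addr0. Qed.
Lemma rhom_pA (R : pzRingType) (A B : rmod R) : rhom (fun x : dsum A B => x.1).
Proof. by []. Qed.
Lemma rhom_pB (R : pzRingType) (A B : rmod R) : rhom (fun x : dsum A B => x.2).
Proof. by []. Qed.

Theorem lemma2p2 (R : pzRingType) (Ob : rmod R -> Prop) (P Q : morclass R)
  (Hind : forall A : rmod R, Ob A -> indecomposable A)
  (HP : completely_prime_ideal Ob P) (HQ : completely_prime_ideal Ob Q)
  (Haut : forall A : rmod R, Ob A -> forall f : A -> A, rhom f ->
            (riso f <-> ~ (P A A f \/ Q A A f)))
  (Hdsp : DSP Ob)
  (A B C : rmod R) (HA : Ob A) (HB : Ob B) (HC : Ob C)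
  (HCA : same_class P C A) (HCB : same_class Q C B) :
  exists D : rmod R, Ob D /\ risomorphic (dsum A B) (dsum C D) /\
    same_class P D B /\ same_class Q D A.
Proof.
have sPCA := HCA; have sQCB := HCB.
case: HCA => [[f [hf nf]] [f' [hf' nf']]].
case: HCB => [[g [hg ng]] [g' [hg' ng']]].
have nPff : ~ P C C (f' \o f) := cpi_comp_not HP HC HA HC hf hf' nf nf'.
have nQgg : ~ Q C C (g' \o g) := cpi_comp_not HQ HC HB HC hg hg' ng ng'.
have iA := @rhom_iA R A B; have iB := @rhom_iB R A B.
have pA := @rhom_pA R A B; have pB := @rhom_pB R A B.
have vuA : forall a : A, ((a, 0) : dsum A B).1 = a by [].
have vuB : forall b : B, ((0, b) : dsum A B).2 = b by [].
case: (classic (Q C C (f' \o f))) => qff; last first.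
  have hi : rhom (fun c => ((f c, 0) : dsum A B)) := rhom_comp hf iA.
  have hpi : rhom (fun x : dsum A B => f' x.1) := rhom_comp pA hf'.
  have [D [j [k [be [oD [iso [hj [hk [hbe kj]]]]]]]]] :=
    construct Haut Hdsp HA HB HC hi hpi nPff qff.
  exists D; split => //; split => //.
  have sPDB := side_lemma HP HB HC oD hi hpi hbe hj hk iB pB vuB kj
    (or_introl (cpi_zero HP HC HB)).
  have sQDB := side_lemma HQ HB HC oD hi hpi hbe hj hk iB pB vuB kj
    (or_introl (cpi_zero HQ HC HB)).
  have [nqf nqf'] := cpi_factors HQ HC HA HC hf hf' qff.
  have sQCA : same_class Q C A by split; [exists f | exists f'].
  split => //.
  apply: (same_trans HQ oD HB HA sQDB).
  exact: (same_trans HQ HB HC HA (same_sym sQCB) sQCA).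
case: (classic (P C C (g' \o g))) => pgg; last first.
  have hi : rhom (fun c => ((0, g c) : dsum A B)) := rhom_comp hg iB.
  have hpi : rhom (fun x : dsum A B => g' x.2) := rhom_comp pB hg'.
  have [D [j [k [be [oD [iso [hj [hk [hbe kj]]]]]]]]] :=
    construct Haut Hdsp HA HB HC hi hpi pgg nQgg.
  exists D; split => //; split => //.
  have sPDA := side_lemma HP HA HC oD hi hpi hbe hj hk iA pA vuA kj
    (or_introl (cpi_zero HP HC HA)).
  have sQDA := side_lemma HQ HA HC oD hi hpi hbe hj hk iA pA vuA kj
    (or_introl (cpi_zero HQ HC HA)).
  have [npg npg'] := cpi_factors HP HC HB HC hg hg' pgg.
  have sPCB : same_class P C B by split; [exists g | exists g'].
  split => //.
  apply: (same_trans HP oD HA HB sPDA).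
  exact: (same_trans HP HA HC HB (same_sym sPCA) sPCB).
have hi : rhom (fun c => ((f c, g c) : dsum A B)).
  by move=> a u v; rewrite hf hg.
have hpi : rhom (fun x : dsum A B => f' x.1 + g' x.2).
  move=> a x y.
  rewrite -[(a *: x + y).1]/(a *: x.1 + y.1) -[(a *: x + y).2]/(a *: x.2 + y.2).
  by rewrite hf' hg' scalerDr addrACA.
have nP : ~ P C C (fun c => f' (f c) + g' (g c)).
  move=> h; apply: nPff.
  have e : (f' \o f) = (fun c => (fun c => f' (f c) + g' (g c)) c - (g' \o g) c).
    by apply: functional_extensionality => c /=; rewrite addrK.
  by rewrite e; apply: (cpi_sub HP).
have nQ : ~ Q C C (fun c => f' (f c) + g' (g c)).
  move=> h; apply: nQgg.
  have e : (g' \o g) = (fun c => (fun c => f' (f c) + g' (g c)) c - (f' \o f) c).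
    by apply: functional_extensionality => c /=; rewrite [f' _ + _]addrC addrK.
  by rewrite e; apply: (cpi_sub HQ).
have [D [j [k [be [oD [iso [hj [hk [hbe kj]]]]]]]]] :=
  construct Haut Hdsp HA HB HC hi hpi nP nQ.
exists D; split => //; split => //.
have hPg : P C B g \/ P B C g' by apply/(cpi_prime HP HC HB HC hg hg').
have hQf : Q C A f \/ Q A C f' by apply/(cpi_prime HQ HC HA HC hf hf').
have eB : (fun b : B => f' ((0, b) : dsum A B).1 + g' ((0, b) : dsum A B).2) = g'.
  by apply: functional_extensionality => b /=; rewrite (lin_0 hf') add0r.
have eA : (fun a : A => f' ((a, 0) : dsum A B).1 + g' ((a, 0) : dsum A B).2) = f'.
  by apply: functional_extensionality => a /=; rewrite (lin_0 hg') addr0.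
split.
  apply: (side_lemma HP HB HC oD hi hpi hbe hj hk iB pB vuB kj).
  case: hPg => h; [left; exact: h | right; rewrite /comp eB; exact: h].
apply: (side_lemma HQ HA HC oD hi hpi hbe hj hk iA pA vuA kj).
case: hQf => h; [left; exact: h | right; rewrite /comp eA; exact: h].
Qed.
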